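(* If a connected graph $G$ has $n\ge 2$ vertices and $k$ blocks, then the graphic TSP cost of $G$ is at least $n+k-1$.
   Context: A block of a graph is a maximal biconnected subgraph (a bridge forms a trivial block). For a connected unweighted undirected graph $G=(V,E)$ with $n\ge 2$ vertices, the graphic TSP cost of $G$ is $\min \sum_{i=1}^{n} d_G(v_i,v_{i+1})$ over all cyclic orderings $(v_1,\dots,v_n)$ of $V$, with $v_{n+1}=v_1$, where $d_G$ is the shortest-path distance in $G$. *)

(* Defs.v *)
(* A simple graph is a symmetric irreflexive relation e on a finType T. *)
From mathcomp Require Import all_boot.
Set Implicit Arguments. Unset Strict Implicit. Unset Printing Implicit Defensive.

Section Graph.
Variables (T : finType) (e : rel T).

Definition restr (S : {set T}) : rel T := fun x y => [&& x \in S, y \in S & e x y].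

Definition connected_in (S : {set T}) : bool :=
  [forall x in S, forall y in S, connect (restr S) x y].

(* G[B] is biconnected: at least 2 vertices, connected, and no cut vertex
   (so a single edge K2 counts as biconnected). *)
Definition biconnected (B : {set T}) : bool :=
  [&& 1 < #|B|, connected_in B & [forall v in B, connected_in (B :\ v)]].

Definition is_block (B : {set T}) : bool :=
  biconnected B && [forall B' : {set T}, (B \proper B') ==> ~~ biconnected B'].

Definition nblocks : nat := #|[set B : {set T} | is_block B]|.

(* shortest-path distance: the least m such that a walk with m edges joins u to v
   (returns #|T| if no such m < #|T| exists, which never happens in a connected graph) *)
Definition dist (u v : T) : nat :=
  find (fun m => [exists p : m.-tuple T, path e u p && (last u p == v)]) (iota 0 #|T|).

Definition tour_cost (s : seq T) : nat :=
  \sum_(p <- zip s (rot 1 s)) dist p.1 p.2.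

(* graphic TSP cost: minimum over all cyclic orderings of V
   (the default value enum T is itself a cyclic ordering, so this is the true minimum) *)
Definition tsp_cost : nat :=
  \big[minn/tour_cost (enum T)]_(t : #|T|.-tuple T | uniq t) tour_cost t.

End Graph.

(* Main.v *)
Require Import Defs.
From mathcomp Require Import all_boot.
Set Implicit Arguments. Unset Strict Implicit. Unset Printing Implicit Defensive.

Section Aux.
Variables (T : finType) (e : rel T).
Hypotheses (e_sym : symmetric e) (e_irr : irreflexive e).
Implicit Types (S A B : {set T}) (x y z a b w r u v : T) (p q c : seq T).

Lemma restr_sym S : symmetric (restr e S).
Proof. by move=> x y; rewrite /restr e_sym andbCA. Qed.

Lemma connS S S' x y : S \subset S' -> connect (restr e S) x y -> connect (restr e S') x y.
Proof.
move=> sub /connectP[p pp ->]; apply/connectP; exists p => //; move: pp.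
apply: sub_path => a b /and3P[aS bS ab].
by rewrite /restr (subsetP sub a aS) (subsetP sub b bS).
Qed.

Lemma conn_of S x y : connected_in e S -> x \in S -> y \in S -> connect (restr e S) x y.
Proof. by move=> /forall_inP H xS yS; move/forall_inP: (H x xS); apply. Qed.

Lemma conn_root S r : (forall x, x \in S -> connect (restr e S) x r) -> connected_in e S.
Proof.
move=> H; apply/forall_inP => x xS; apply/forall_inP => y yS.
apply: connect_trans (H x xS) _.
by rewrite (sym_connect_sym (restr_sym S)); apply: H.
Qed.

Lemma conn_union A B r : connected_in e A -> connected_in e B -> r \in A -> r \in B ->
  connected_in e (A :|: B).
Proof.
move=> cA cB rA rB; apply: (@conn_root _ r) => x; rewrite inE => /orP[xA|xB].
  by apply: connS (conn_of cA xA rA); apply: subsetUl.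
by apply: connS (conn_of cB xB rB); apply: subsetUr.
Qed.

Lemma bic_conn B : biconnected e B -> connected_in e B.
Proof. by case/and3P. Qed.

Lemma bic_card B : biconnected e B -> 1 < #|B|.
Proof. by case/and3P. Qed.

Lemma bic_del B w : biconnected e B -> connected_in e (B :\ w).
Proof.
case/and3P => _ cB /forall_inP H; case: (boolP (w \in B)) => [/H //| wB].
have -> : B :\ w = B; last by [].
apply/setP => x; rewrite !inE; case: eqP => // ->; by rewrite (negbTE wB).
Qed.

Lemma bic_union A B x y : biconnected e A -> biconnected e B -> x != y ->
  x \in A -> x \in B -> y \in A -> y \in B -> biconnected e (A :|: B).
Proof.
move=> bA bB xy xA xB yA yB; apply/and3P; split.
- exact: leq_trans (bic_card bA) (subset_leq_card (subsetUl A B)).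
- exact: conn_union (bic_conn bA) (bic_conn bB) xA xB.
apply/forall_inP => w _; rewrite setDUl.
case: (eqVneq w x) => [->|wx].
  by apply: (conn_union (bic_del x bA) (bic_del x bB) (r:=y)); rewrite !inE eq_sym xy.
by apply: (conn_union (bic_del w bA) (bic_del w bB) (r:=x)); rewrite !inE eq_sym wx.
Qed.

Lemma block_max B B' : is_block e B -> B \proper B' -> biconnected e B' -> False.
Proof. by case/andP => _ /forallP/(_ B') /implyP H /H /negP. Qed.

Lemma block_bic B : is_block e B -> biconnected e B.
Proof. by case/andP. Qed.

Lemma block_eq A B x y : is_block e A -> is_block e B -> x != y ->
  x \in A -> x \in B -> y \in A -> y \in B -> A = B.
Proof.
move=> bA bB xy xA xB yA yB.
have U := bic_union (block_bic bA) (block_bic bB) xy xA xB yA yB.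
have EA : A :|: B = A.
  apply/eqP; apply: contraT => neq; exfalso; apply: (block_max bA _ U).
  by rewrite properEneq eq_sym neq subsetUl.
have EB : A :|: B = B.
  apply/eqP; apply: contraT => neq; exfalso; apply: (block_max bB _ U).
  by rewrite properEneq eq_sym neq subsetUr.
by rewrite -EA EB.
Qed.

Lemma conn_complete S : (forall a b, a \in S -> b \in S -> a = b \/ e a b) -> connected_in e S.
Proof.
move=> H; apply/forall_inP => x xS; apply/forall_inP => y yS.
case: (H x y xS yS) => [->|exy]; first exact: connect0.
by apply: connect1; rewrite /restr xS yS exy.
Qed.

Lemma edge_block x y : e x y -> exists B, [&& is_block e B, x \in B & y \in B].
Proof.
move=> exy; have xy : x != y by apply: contraTneq exy => ->; rewrite e_irr.
set B0 := [set x; y].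
have HB0 : forall a b, a \in B0 -> b \in B0 -> a = b \/ e a b.
  move=> a b; rewrite !inE => /orP[]/eqP-> /orP[]/eqP->; try by left.
    by right.
  by right; rewrite e_sym.
have bB0 : biconnected e B0.
  apply/and3P; split; first by rewrite cards2 xy.
    exact: conn_complete.
  apply/forall_inP => w _; apply: conn_complete => a b.
  rewrite !inE => /andP[_ aB] /andP[_ bB]; apply: HB0; rewrite !inE //.
pose P B := biconnected e B && (B0 \subset B).
have PB0 : P B0 by rewrite /P bB0 subxx.
case: (arg_maxnP (fun B => #|B|) PB0) => Bm /andP[bBm sBm] maxBm.
exists Bm; apply/and3P; split.
- rewrite /is_block bBm /=; apply/forallP => B'; apply/implyP => pr; apply/negP => bB'.
  have := maxBm B'; rewrite /P bB' (subset_trans sBm (proper_sub pr)) => /(_ isT).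
  by rewrite /= leqNgt proper_card.
- by apply: (subsetP sBm); rewrite !inE eqxx.
by apply: (subsetP sBm); rewrite !inE eqxx orbT.
Qed.


Lemma path_conn S s0 p x : path e s0 p -> {subset s0 :: p <= S} -> x \in s0 :: p ->
  connect (restr e S) s0 x.
Proof.
elim: p s0 => [|a p IH] s0 /=.
  by move=> _ _; rewrite inE => /eqP->; apply: connect0.
move=> /andP[es0a pa] sub; rewrite inE => /orP[/eqP->|xp]; first exact: connect0.
apply: connect_trans (IH a pa _ xp).
  apply: connect1; rewrite /restr es0a !sub ?inE ?eqxx ?orbT //.
by move=> z zp; apply: sub; rewrite inE zp orbT.
Qed.

Lemma path_conn2 S s0 p x y : path e s0 p -> {subset s0 :: p <= S} -> x \in s0 :: p ->
  y \in s0 :: p -> connect (restr e S) x y.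
Proof.
move=> pp sub xp yp; apply: connect_trans (path_conn pp sub yp).
by rewrite (sym_connect_sym (restr_sym S)); apply: path_conn pp sub xp.
Qed.

Lemma ear_simple B y z I a : is_block e B -> y \in B -> z \in B -> y != z ->
  a \in I -> all (fun x => x \notin B) I -> uniq I -> path e y (rcons I z) -> False.
Proof.
move=> bB yB zB yz aI hI uI pth'.
have nIB : forall x, x \in I -> x \notin B by move=> x; apply: (allP hI).
set B' := B :|: [set x | x \in I].
have inB' : forall x, (x \in B') = (x \in B) || (x \in I) by move=> x; rewrite !inE.
have bicB := block_bic bB.
have pI : path e y I by move: pth'; rewrite rcons_path => /andP[].
apply: (block_max bB (B' := B')).
  apply/properP; split; first exact: subsetUl.
  by exists a; rewrite ?inB' ?aI ?orbT //; apply: nIB.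
apply/and3P; split.
- apply: leq_trans (bic_card bicB) (subset_leq_card (subsetUl _ _)).
- apply: (@conn_root _ y) => x; rewrite inB' => /orP[xB|xI].
    by apply: connS (conn_of (bic_conn bicB) xB yB); apply: subsetUl.
  apply: (path_conn2 pth'); try by rewrite in_cons ?mem_rcons ?in_cons ?eqxx ?xI ?orbT.
  move=> u; rewrite in_cons mem_rcons in_cons => /or3P[/eqP->|/eqP->|uI']; rewrite inB' ?yB ?zB //.
  by rewrite uI' orbT.
apply/forall_inP => w wB'.
case: (boolP (w \in B)) => wB.
  have wI : w \notin I by apply: contraL wB; apply: nIB.
  pose r0 := if w == z then y else z.
  have r0B : r0 \in B :\ w.
    rewrite /r0; case: eqP => [->|/eqP wz]; rewrite !inE ?yB ?zB ?andbT //.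
    by rewrite eq_sym.
  apply: (@conn_root _ r0) => x; rewrite in_setD1 inB' => /andP[xw /orP[xB|xI]].
    apply: connS (conn_of (bic_del w bicB) _ r0B); first by apply/subsetP => u; rewrite !inE => /andP[-> ->].
    by rewrite !inE xw.
  rewrite /r0; case: eqP => [wz|/eqP wz].
    apply: (path_conn2 pI); rewrite ?in_cons ?xI ?orbT ?eqxx //.
    move=> u; rewrite in_cons => /orP[/eqP->|uI'].
      by rewrite in_setD1 inB' yB wz yz.
    by rewrite in_setD1 inB' uI' orbT andbT; apply: contraNneq wI => <-.
  case E: I aI => [//|b I'] _; rewrite E in pth' xI.
  have pz : path e b (rcons I' z) by case/andP: pth'.
  apply: (path_conn2 pz); first last.
  - by rewrite -rcons_cons mem_rcons in_cons eqxx.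
  - by rewrite -rcons_cons mem_rcons in_cons xI orbT.
  move=> u; rewrite -rcons_cons mem_rcons in_cons => /orP[/eqP->|uI'].
    by rewrite in_setD1 inB' zB eq_sym wz.
  rewrite in_setD1 inB' E uI' orbT andbT. by apply: contraNneq wI => <-; rewrite E.
have wI : w \in I by move: wB'; rewrite inB' (negbTE wB).
have BS : B \subset B' :\ w.
  by apply/subsetP => u uB; rewrite in_setD1 inB' uB andbT; apply: contraNneq wB => <-.
apply: (@conn_root _ y) => x; rewrite in_setD1 inB' => /andP[xw /orP[xB|xI]].
  by apply: connS BS (conn_of (bic_conn bicB) xB yB).
have inB'w : forall u, u != w -> u \in I -> u \in B' :\ w.
  by move=> u uw uI'; rewrite in_setD1 inB' uw uI' orbT.
case/splitPr: wI uI pth' pI xI inB'w => I1 I2 uI pth' _ xI inB'w.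
move: uI; rewrite cat_uniq /= => /and3P[_ /norP[wI1 _] /andP[wI2 _]].
move: xI; rewrite mem_cat in_cons (negbTE xw) /= => /orP[xI1|xI2].
  have pI1 : path e y I1 by move: pth'; rewrite rcons_cat cat_path => /andP[].
  apply: (path_conn2 pI1); rewrite ?in_cons ?xI1 ?orbT ?eqxx //.
  move=> u; rewrite in_cons => /orP[/eqP->|uI1].
    by rewrite (subsetP BS).
  apply: inB'w; last by rewrite mem_cat uI1.
  by apply: contraNneq wI1 => <-.
case: I2 wI2 pth' xI2 inB'w => [//|b I2] wI2 pth' xI2 inB'w.
have pb : path e b (rcons I2 z).
  by move: pth'; rewrite rcons_cat cat_path /= => /and3P[_ _ /andP[_]].
apply: connect_trans (connS BS (conn_of (bic_conn bicB) zB yB)).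
apply: (path_conn2 pb); first last.
- by rewrite in_cons mem_rcons in_cons eqxx orbT.
- by rewrite -rcons_cons mem_rcons in_cons xI2 orbT.
move=> u; rewrite in_cons mem_rcons in_cons => /or3P[/eqP->|/eqP->|uI2].
- apply: inB'w; last by rewrite mem_cat !in_cons eqxx !orbT.
  by apply: contraNneq wI2 => <-; rewrite in_cons eqxx.
- by rewrite (subsetP BS).
apply: inB'w; last by rewrite mem_cat !in_cons uI2 !orbT.
by apply: contraNneq wI2 => <-; rewrite in_cons uI2 orbT.
Qed.


Lemma ear B y z a q : is_block e B -> y \in B -> z \in B -> y != z -> a \notin B ->
  all (fun x => x \notin B) q -> e y a -> path e a (rcons q z) -> False.
Proof.
move=> bB yB zB yz aB hq eya pa.
have [p' [pp' up' sub' lz]] : exists p', [/\ path e a p', uniq (a :: p'),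
    {subset p' <= rcons q z} & last a p' = last a (rcons q z)].
  by case: (shortenP pa) => p' ? ? ?; exists p'.
rewrite last_rcons in lz.
case/lastP: p' pp' up' sub' lz => [_ _ _ /= az|r z' pp' up' sub' lz].
  by move: aB; rewrite az zB.
rewrite last_rcons in lz; subst z'.
move: up'; rewrite cons_uniq rcons_uniq mem_rcons in_cons => /andP[/norP[_ ar] /andP[zr ur]].
apply: (@ear_simple B y z (a :: r) a) => //.
- by rewrite in_cons eqxx.
- rewrite /= aB /=; apply/allP => u ur'.
  have : u \in rcons q z by apply: sub'; rewrite mem_rcons in_cons ur' orbT.
  rewrite mem_rcons in_cons => /orP[/eqP uz|uq]; first by move: zr; rewrite -uz ur'.
  exact: (allP hq).
- by rewrite cons_uniq ar ur.
by rewrite rcons_cons /= eya.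
Qed.


Definition pairs (y : T) (p : seq T) : seq (T * T) := zip (belast y p) p.

Lemma pairs_cons y a p : pairs y (a :: p) = (y, a) :: pairs a p.
Proof. by []. Qed.

Lemma pairs_cat y p1 p2 : pairs y (p1 ++ p2) = pairs y p1 ++ pairs (last y p1) p2.
Proof. by rewrite /pairs belast_cat zip_cat // size_belast. Qed.

Lemma size_pairs y p : size (pairs y p) = size p.
Proof. by rewrite /pairs size_zip size_belast minnn. Qed.

Lemma pairs_edge y p u v : path e y p -> (u, v) \in pairs y p -> e u v.
Proof.
elim: p y => [//|a p IH] y /= /andP[eya pa]; rewrite pairs_cons in_cons => /orP[/eqP[-> ->] //|].
exact: IH.
Qed.

Lemma split_first (P : pred T) p : has P p ->
  exists q z (r : seq T), [/\ p = q ++ z :: r, P z & all (predC P) q].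
Proof.
elim: p => [//|a p IH] /= /orP[Pa|hp].
  by exists [::], a, p.
case: (boolP (P a)) => Pa; first by exists [::], a, p.
have [q [z [r [-> Pz aq]]]] := IH hp.
by exists (a :: q), z, r; rewrite /= Pa aq.
Qed.

Lemma step_in B v n : is_block e B -> v \in B -> forall p y, size p <= n -> y \in B -> y != v ->
  path e y p -> v \in p -> exists u, u \in B /\ (u, v) \in pairs y p.
Proof.
move=> bB vB; elim: n => [|n IH] [|a p] y //= sp yB yv /andP[eya pa] vp.
case: (eqVneq a v) => [av|av].
  by exists y; split => //; rewrite pairs_cons in_cons av eqxx.
have vp' : v \in p by move: vp; rewrite in_cons eq_sym (negbTE av).
case: (boolP (a \in B)) => aB.
  have [u [uB uv]] := IH p a sp aB av pa vp'.
  by exists u; split => //; rewrite pairs_cons in_cons uv orbT.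
have hB : has (mem B) p by apply/hasP; exists v.
have [q [z [r [pE zB qB]]]] := split_first hB.
move: pa; rewrite pE cat_path /= => /and3P[pq ez pr].
case: (eqVneq z y) => [zy|zy]; last first.
  exfalso; apply: (@ear B y z a q) => //; first by rewrite eq_sym.
  by rewrite rcons_path pq.
subst z.
have vr : v \in r.
  move: vp'; rewrite pE mem_cat in_cons [v == y]eq_sym (negbTE yv) /= => /orP[vq|//].
  by move: (allP qB v vq); rewrite /= vB.
have sr : size r <= n.
  move: sp; rewrite pE size_cat /= ltnS => H; apply: leq_trans H; rewrite addnS.
  exact: leq_trans (leq_addl _ _) (leqnSn _).
have [u [uB uv]] := IH r y sr yB yv pr vr.
exists u; split => //.
by rewrite pairs_cons pairs_cat pairs_cons !in_cons mem_cat in_cons uv !orbT.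
Qed.

Lemma rot_walk x c x' : x' \in x :: c -> exists c1 c2, c = c1 ++ c2 /\ last x c1 = x'.
Proof.
elim: c x => [|a c IH] x; rewrite in_cons.
  by rewrite in_nil orbF => /eqP->; exists [::], [::].
case: (eqVneq x' x) => [->|_] /=; first by exists [::], (a :: c).
move=> /IH [c1 [c2 [-> l]]]; by exists (a :: c1), c2.
Qed.

Lemma key B v x c : path e x c -> last x c = x -> (forall w, w \in x :: c) ->
  is_block e B -> v \in B -> exists u, u \in B /\ (u, v) \in pairs x c.
Proof.
move=> pc lc cov bB vB.
have [x' x'B x'v] : exists2 x', x' \in B & x' != v.
  case: (pickP (fun x' => (x' \in B) && (x' != v))) => [x' /andP[]|none]; first by exists x'.
  have := bic_card (block_bic bB).
  have : B \subset [set v].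
    apply/subsetP => w wB; rewrite inE; move: (none w); rewrite wB /=.
    by move/negbFE.
  by move/subset_leq_card; rewrite cards1 => H1 H2; move: (leq_trans H2 H1).
have [c1 [c2 [cE l1]]] := rot_walk (cov x').
have lc2 : last x' c2 = x by rewrite -l1 -last_cat -cE.
have pc' : path e x' (c2 ++ c1).
  move: pc; rewrite cE !cat_path l1 lc2 => /andP[-> ->]; by [].
have vc' : v \in c2 ++ c1.
  move: (cov v); rewrite in_cons => /orP[/eqP vx|].
    have : v \in x' :: c2 by rewrite vx -lc2 mem_last.
    by rewrite in_cons eq_sym (negbTE x'v) mem_cat /= => ->.
  by rewrite cE !mem_cat orbC.
have [u [uB uv]] := step_in (n := size (c2 ++ c1)) bB vB (leqnn _) x'B x'v pc' vc'.
exists u; split => //.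
by move: uv; rewrite cE !pairs_cat lc2 l1 !mem_cat orbC.
Qed.


Lemma dist_spec u v : connect e u v ->
  dist e u v < #|T| /\ exists t : (dist e u v).-tuple T, path e u t && (last u t == v).
Proof.
move=> /connectP[p pp ->].
case: (shortenP pp) => p' pp' up' _.
pose P := fun m => [exists t : m.-tuple T, path e u t && (last u t == last u p')].
have sz : size p' < #|T|.
  have := max_card (mem (u :: p')); rewrite (card_uniqP up') /=; by [].
have hP : has P (iota 0 #|T|).
  apply/hasP; exists (size p'); first by rewrite mem_iota.
  by apply/existsP; exists (in_tuple p'); rewrite /= pp' eqxx.
have fl : dist e u (last u p') < #|T| by move: (hP); rewrite has_find size_iota.
split => //.
have := nth_find 0 hP; rewrite nth_iota // add0n => /existsP[t ht].
by exists t.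
Qed.

Lemma dist_le u p : path e u p -> size p < #|T| -> dist e u (last u p) <= size p.
Proof.
move=> pp sz; rewrite leqNgt; apply/negP => lt.
have := before_find 0 lt; rewrite nth_iota // add0n => /existsP; apply.
by exists (in_tuple p); rewrite /= pp eqxx.
Qed.

Definition W u v : seq T :=
  if [pick t : (dist e u v).-tuple T | path e u t && (last u t == v)] is Some t then val t else [::].

Lemma W_spec u v : connect e u v ->
  [/\ path e u (W u v), last u (W u v) = v & size (W u v) = dist e u v].
Proof.
move=> cuv; rewrite /W; case: pickP => [t /andP[pt /eqP lt]|none]; first by rewrite size_tuple.
have [_ [t ht]] := dist_spec cuv.
by move: (none t); rewrite ht.
Qed.


Fixpoint wcat (y : T) (p : seq T) : seq T :=
  if p is a :: p' then W y a ++ wcat a p' else [::].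

Lemma wcat_spec (conn : forall u v, connect e u v) y p :
  [/\ path e y (wcat y p), last y (wcat y p) = last y p,
      size (wcat y p) = \sum_(q <- pairs y p) dist e q.1 q.2
    & {subset y :: p <= y :: wcat y p}].
Proof.
elim: p y => [|a p IH] y /=.
  by split => //; rewrite /pairs /= big_nil.
have [pW lW sW] := W_spec (conn y a).
have [pc lc sc sub] := IH a.
split.
- by rewrite cat_path pW lW pc.
- by rewrite last_cat lW lc.
- by rewrite size_cat sW sc pairs_cons big_cons.
move=> z; rewrite in_cons => /orP[/eqP->|za]; first by rewrite in_cons eqxx.
have := sub z za; rewrite !in_cons mem_cat => /orP[/eqP->|->]; last by rewrite !orbT.
by move: (mem_last y (W y a)); rewrite lW in_cons => /orP[->|->]; rewrite ?orbT.
Qed.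


Lemma count_bound (conn : forall u v, connect e u v) x c : path e x c -> last x c = x ->
  (forall w, w \in x :: c) -> #|T| + nblocks e - 1 <= size c.
Proof.
move=> pc lc cov.
pose d v := dist e x v.
pose rep B := odflt x [pick v in B | [forall u in B, d v <= d u]].
have rep_spec : forall B, is_block e B -> rep B \in B /\ (forall u, u \in B -> d (rep B) <= d u).
  move=> B bB.
  have : 0 < #|B| by apply: ltnW (bic_card (block_bic bB)).
  case/card_gt0P => v0 v0B.
  case: (@arg_minnP _ v0 (fun i => i \in B) d v0B) => m mB minm.
  rewrite /rep; case: pickP => [v /andP[vB /forall_inP H]|none] /=; first by split => // u /H.
  move: (none m); rewrite mB /= => /negbT/negP; case; apply/forall_inP => u uB; exact: minm.
have par_ex : forall v, v != x -> exists u, e u v && (d u < d v).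
  move=> v vx; have [pW lW sW] := W_spec (conn x v).
  have [dlt _] := dist_spec (conn x v).
  move: pW lW sW; case/lastP: (W x v) => [_ /= vx'|p' v' pW lW sW].
    by move: vx; rewrite vx' eqxx.
  rewrite last_rcons in lW; subst v'.
  move: pW; rewrite rcons_path => /andP[pp' ep'].
  exists (last x p'); rewrite ep' /=.
  rewrite size_rcons in sW.
  have sp : size p' < #|T| by apply: leq_trans dlt; rewrite -sW.
  by apply: leq_ltn_trans (dist_le pp' sp) _; rewrite /d -sW.
pose par v := odflt v [pick u | e u v && (d u < d v)].
have par_spec : forall v, v != x -> e (par v) v /\ d (par v) < d v.
  move=> v vx; rewrite /par; case: pickP => [u /andP[h1 h2]|none]; first by split.
  have [u hu] := par_ex v vx; by move: (none u); rewrite hu.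
pose bl v := odflt set0 [pick B | [&& is_block e B, par v \in B & v \in B]].
have bl_spec : forall v, v != x -> [&& is_block e (bl v), par v \in bl v & v \in bl v].
  move=> v vx; rewrite /bl; case: pickP => [B -> //|none].
  have [B hB] := edge_block (proj1 (par_spec v vx)); by move: (none B); rewrite hB.
pose S1 := [set p : {set T} * T | is_block e p.1 && (p.2 \in p.1)].
pose Q := [set (B, rep B) | B in [set B | is_block e B]].
pose P := [set (bl v, v) | v in [set~ x]].
have cQ : #|Q| = nblocks e.
  by rewrite card_in_imset // => B1 B2 _ _ [].
have cP : #|P| = #|T|.-1 by rewrite card_in_imset ?cardsC1 // => v1 v2 _ _ [].
have PQ : P :&: Q = set0.
  apply/setP => p; rewrite !inE; apply/negP => /andP[/imsetP[v vx ->] /imsetP[B bB [eB ev]]].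
  rewrite !inE in vx bB.
  have /and3P[_ pB _] := bl_spec v vx.
  have [_ lt] := par_spec v vx.
  have [_ minB] := rep_spec B bB.
  have pB' : par v \in B by rewrite -eB.
  have := minB _ pB'; rewrite -ev.
  by rewrite leqNgt lt.
have sub : P :|: Q \subset S1.
  apply/subsetP => p; rewrite inE => /orP[/imsetP[v vx ->]|/imsetP[B bB ->]]; rewrite inE /=.
    by rewrite !inE in vx; have /and3P[-> _ ->] := bl_spec v vx.
  by rewrite inE in bB; rewrite bB; case: (rep_spec B bB).
have c1 : #|T|.-1 + nblocks e <= #|S1|.
  by rewrite -cP -cQ -cardsUI PQ cards0 addn0; exact: subset_leq_card sub.
pose f (p : {set T} * T) := (odflt p.2 [pick u | (u \in p.1) && ((u, p.2) \in pairs x c)], p.2).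
have f_spec : forall s, s \in S1 -> ((f s).1 \in s.1) && (((f s).1, s.2) \in pairs x c).
  move=> [B v]; rewrite inE /= => /andP[bB vB]; rewrite /f /=; case: pickP => [u -> //|none].
  have [u [uB uv]] := key pc lc cov bB vB; by move: (none u); rewrite uB uv.
have finj : {in S1 &, injective f}.
  move=> p1 p2 h1 h2 eqf.
  have e2 : p1.2 = p2.2 by have := congr1 snd eqf.
  have /andP[u1 uv1] := f_spec p1 h1.
  have /andP[u2 uv2] := f_spec p2 h2.
  rewrite -eqf in u2.
  move: h1 h2; rewrite !inE => /andP[b1 v1] /andP[b2 v2].
  rewrite -e2 in v2.
  have uv : (f p1).1 != p1.2.
    by apply/eqP => E; move: (pairs_edge pc uv1); rewrite E e_irr.
  have E1 := block_eq b1 b2 uv u1 u2 v1 v2.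
  by case: p1 p2 E1 e2 {eqf uv1 uv2 u1 u2 v1 v2 b1 b2 uv} => [? ?] [? ?] /= -> ->.
have c2 : #|S1| <= size c.
  rewrite -(card_in_imset finj) -(size_pairs x c).
  apply: leq_trans (card_size (pairs x c)).
  apply: subset_leq_card; apply/subsetP => q /imsetP[s hs ->].
  by have /andP[_ ->] := f_spec s hs.
have hT : 0 < #|T| by apply/card_gt0P; exists x.
rewrite addnC -addnBA // addnC subn1; exact: leq_trans c1 c2.
Qed.

End Aux.

Lemma tour_bound (T : finType) (e : rel T) (e_sym : symmetric e) (e_irr : irreflexive e)
  (conn : forall x y : T, connect e x y) (n2 : 2 <= #|T|) (s : seq T) :
  uniq s -> size s = #|T| -> #|T| + nblocks e - 1 <= tour_cost e s.
Proof.
move=> us ss.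
have covs : forall w, w \in s.
  have hs : size (enum T) <= size s by rewrite ss cardE.
  have [_ H] := uniq_min_size us (fun z _ => (mem_enum T z : z \in enum T)) hs.
  by move=> w; rewrite H mem_enum.
case: s us ss covs => [|x s'] us ss covs; first by rewrite -ss in n2.
have [pc lc sc sub] := wcat_spec conn x (rcons s' x).
rewrite /tour_cost rot1_cons.
have -> : zip (x :: s') (rcons s' x) = pairs x (rcons s' x) by rewrite /pairs belast_rcons.
rewrite -sc; apply: (count_bound e_sym e_irr conn pc); first by rewrite lc last_rcons.
move=> w; apply: sub; rewrite -rcons_cons mem_rcons in_cons covs orbT. by [].
Qed.

Theorem mainTheorem8 (T : finType) (e : rel T)
  (e_sym : symmetric e) (e_irr : irreflexive e)
  (e_conn : forall x y : T, connect e x y)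
  (n_ge2 : 2 <= #|T|) :
  #|T| + nblocks e - 1 <= tsp_cost e.
Proof.
rewrite /tsp_cost; apply: (big_ind (fun m => #|T| + nblocks e - 1 <= m)).
- by apply: tour_bound => //; [exact: enum_uniq | rewrite cardE].
- by move=> a b ha hb; rewrite leq_min ha hb.
move=> t ut; exact: tour_bound ut (size_tuple t).
Qed.
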